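(* Let $\mathcal{P}$ be a finite nonempty set of stochastic trees and $\Pi$ any stochastic partition of $S_\mathcal{P}$. Then $P\preceq\mathcal{P}/\Pi$ for every $P\in\mathcal{P}$.
   Context: $\mathrm{Dist}(S)$ is the set of discrete probability distributions on $S$ (rational probabilities), $\delta_g$ the Dirac distribution on $g$. An LPTS is $\langle S,s^0,\alpha,\tau\rangle$ with finite $S$, start $s^0$, finite actions $\alpha$, finite $\tau\subseteq S\times\alpha\times\mathrm{Dist}(S)$; write $s\xrightarrow{a}\mu$. Strong simulation: $\mu_1\sqsubseteq_R\mu_2$ iff there is $w:S_1\times S_2\to\mathbb{Q}\cap[0,1]$ with $\sum_{s_2}w(s_1,s_2)=\mu_1(s_1)$, $\sum_{s_1}w(s_1,s_2)=\mu_2(s_2)$ and $w(s_1,s_2)>0\Rightarrow s_1Rs_2$; $R$ is a strong simulation iff $s_1Rs_2$ and $s_1\xrightarrow{a}\mu_1$ imply some $s_2\xrightarrow{a}\mu_2$ with $\mu_1\sqsubseteq_R\mu_2$; $L_1\preceq L_2$ iff a strong simulation relates the start states. A stochastic tree is an LPTS whose start state is in the support of no transition's distribution and each other state is in the support of exactly one transition's distribution; for a non-start state $s$, $\mathrm{parent}(s)$ is the source of that transition. $S_\mathcal{P}$ is the (disjoint) union of the state sets of the trees in $\mathcal{P}$. A stochastic partition of $S_\mathcal{P}$ is a pair $(G,\{[s]\}_{s\in S_\mathcal{P}})$ with $G\subseteq 2^{S_\mathcal{P}}$, $\bigcup G=S_\mathcal{P}$, each $[s]$ a partial function $G\to\mathrm{Dist}(G)$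 (convention: $[s](g')(g)=0$ when $[s](g')$ is undefined), such that (1) there is $g^0\in G$ with $[s^0_P](g)=\delta_{g^0}$ for all $P\in\mathcal{P}$, $g\in G$; (2) for non-start $s$ and $g\in G$, $[s](g)$ is defined iff $[\mathrm{parent}(s)](g')(g)>0$ for some $g'$; and $s\in g$ iff $[s](g')(g)>0$ for some $g'$. The quotient $\mathcal{P}/\Pi$ has states $G$, start $g^0$, actions $\bigcup_P\alpha_P$, and transition $(g,a,\mu)$ iff some $P\in\mathcal{P}$ has $s\xrightarrow{a}\mu_p$ with $s\in g$ and $\mu(g')=\sum_{s'\in g'}[s'](g)(g')\mu_p(s')$ for all $g'\in G$. *)

(* Defs.v *)
From HB Require Import structures.
From mathcomp Require Import all_boot all_order all_algebra.
Set Implicit Arguments. Unset Strict Implicit. Unset Printing Implicit Defensive.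
Import Order.TTheory GRing.Theory Num.Theory.
Local Open Scope ring_scope.

Definition is_dist (S : finType) (mu : {ffun S -> rat}) : Prop :=
  (forall s, 0 <= mu s) /\ \sum_(s : S) mu s = 1.

Definition dirac (S : finType) (x : S) : {ffun S -> rat} :=
  [ffun y => (y == x)%:R].

(* An LPTS <S, s0, alpha, tau> over the finite state type S and actions in A.
   tau is a finite set of transitions, represented by a duplicate-free list. *)
Record lpts (S : finType) (A : eqType) := LPTS {
  l_start : S;
  l_acts  : seq A;
  l_trans : seq (S * A * {ffun S -> rat})
}.

Definition lpts_wf (S : finType) (A : eqType) (L : lpts S A) : Prop :=
  uniq (l_trans L) /\
  (forall t, t \in l_trans L -> t.1.2 \in l_acts L /\ is_dist t.2).

Definition lift_rel (S1 S2 : finType) (R : S1 -> S2 -> Prop)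
    (mu1 : {ffun S1 -> rat}) (mu2 : {ffun S2 -> rat}) : Prop :=
  exists w : S1 -> S2 -> rat,
    [/\ forall s1 s2, 0 <= w s1 s2 <= 1,
        forall s1, \sum_(s2 : S2) w s1 s2 = mu1 s1,
        forall s2, \sum_(s1 : S1) w s1 s2 = mu2 s2 &
        forall s1 s2, 0 < w s1 s2 -> R s1 s2].

Definition strong_sim (S1 S2 : finType) (A : eqType)
    (L1 : lpts S1 A) (L2 : lpts S2 A) (R : S1 -> S2 -> Prop) : Prop :=
  forall s1 s2 a mu1, R s1 s2 -> (s1, a, mu1) \in l_trans L1 ->
    exists2 mu2, (s2, a, mu2) \in l_trans L2 & lift_rel R mu1 mu2.

Definition simulated (S1 S2 : finType) (A : eqType)
    (L1 : lpts S1 A) (L2 : lpts S2 A) : Prop :=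
  exists R, strong_sim L1 L2 R /\ R (l_start L1) (l_start L2).

Definition stoch_tree (S : finType) (A : eqType) (L : lpts S A) : Prop :=
  [/\ lpts_wf L,
      forall t, t \in l_trans L -> ~~ (0 < t.2 (l_start L)) &
      forall s, s != l_start L -> count (fun t : S * A * {ffun S -> rat} => 0 < t.2 s) (l_trans L) = 1%N].

Definition is_parent (S : finType) (A : eqType) (L : lpts S A) (s p : S) : Prop :=
  exists2 t, t \in l_trans L & (0 < t.2 s) && (t.1.1 == p).

Notation SP S := {i : _ & S i}.

Notation GT G := {g : {set _} | g \in G}.

(* [s](g')(g), with value 0 when [s](g') is undefined *)
Definition clsv (I : finType) (S : I -> finType) (G : {set {set SP S}})
    (cls : SP S -> GT G -> option {ffun GT G -> rat}) (s : SP S) (g' g : GT G) : rat :=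
  if cls s g' is Some mu then mu g else 0.

Definition stoch_partition (A : eqType) (I : finType) (S : I -> finType)
    (P : forall i, lpts (S i) A) (G : {set {set SP S}})
    (cls : SP S -> GT G -> option {ffun GT G -> rat}) (g0 : GT G) : Prop :=
  [/\ \bigcup_(g in G) g = [set: SP S],
      forall (s : SP S) (g : GT G) mu, cls s g = Some mu -> is_dist mu,
      forall i (g : GT G), cls (Tagged S (l_start (P i))) g = Some (dirac g0),
      forall i (x : S i) (p : S i), x != l_start (P i) -> is_parent (P i) x p ->
        forall g : GT G, cls (Tagged S x) g <> None <->
                  exists g', 0 < clsv cls (Tagged S p) g' g &
      forall (s : SP S) (g : GT G), s \in val g <-> exists g', 0 < clsv cls s g' g].

(* distribution of the quotient transition induced by s --a--> mu_p from block g *)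
Definition qmu (I : finType) (S : I -> finType) (G : {set {set SP S}})
    (cls : SP S -> GT G -> option {ffun GT G -> rat}) (g : GT G) (i : I)
    (mu : {ffun S i -> rat}) : {ffun GT G -> rat} :=
  [ffun g' : GT G => \sum_(x : S i | Tagged S x \in val g') clsv cls (Tagged S x) g g' * mu x].

Definition quotient (A : eqType) (I : finType) (S : I -> finType)
    (P : forall i, lpts (S i) A) (G : {set {set SP S}})
    (cls : SP S -> GT G -> option {ffun GT G -> rat}) (g0 : GT G) : lpts (GT G) A :=
  LPTS g0 (flatten [seq l_acts (P i) | i <- enum I])
    (flatten [seq flatten [seq [seq (g, t.1.2, qmu cls g t.2)
                                 | g : GT G <- enum {: GT G} & Tagged S t.1.1 \in val g]
                          | t : S i * A * {ffun S i -> rat} <- l_trans (P i)]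
             | i : I <- enum I]).

(* Main.v *)
Require Import Defs.
From mathcomp Require Import all_boot all_order all_algebra.
Set Implicit Arguments. Unset Strict Implicit. Unset Printing Implicit Defensive.
Import Order.TTheory GRing.Theory Num.Theory.

Lemma dist_bounds (T : finType) (m : {ffun T -> rat}) y :
  is_dist m -> (0 <= m y <= 1)%R.
Proof.
move=> [H0 H1]; rewrite H0 /=; rewrite -H1 (bigD1 y) //=.
by rewrite lerDl sumr_ge0.
Qed.

Theorem lemma9 (A : eqType) (I : finType) (S : I -> finType)
    (P : forall i, lpts (S i) A) (G : {set {set {i : I & S i}}})
    (cls : {i : I & S i} -> {g : {set {i : I & S i}} | g \in G} ->
           option {ffun {g : {set {i : I & S i}} | g \in G} -> rat})
    (g0 : {g : {set {i : I & S i}} | g \in G}) :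
  (0 < #|I|)%N ->
  (forall i, stoch_tree (P i)) ->
  stoch_partition P cls g0 ->
  forall i, simulated (P i) (quotient P cls g0).
Proof.
move=> _ Htree [_ Hcd Hst Hpar Hmem] i.
have Hclsb : forall s g g', (0 <= clsv cls s g g' <= 1)%R.
  move=> s g g'; rewrite /clsv; case E: (cls s g) => [m|].
    exact: dist_bounds (Hcd _ _ _ E).
  by rewrite lexx ler01.
have [[_ Hwf] Hnost _] := Htree i.
exists (fun (s : S i) (g : {g : {set {i : I & S i}} | g \in G}) => Tagged S s \in val g).
split; last first.
  apply/Hmem; exists g0; by rewrite /clsv Hst /dirac ffunE eqxx ltr01.
move=> s g a mu1 Hsg Htr.
have [_ Hd] := Hwf _ Htr.
exists (qmu cls g mu1).
  apply/flattenP; eexists; first by apply: map_f; exact: mem_enum.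
  apply/flattenP; eexists; first by apply: map_f; exact: Htr.
  by apply: map_f; rewrite mem_filter Hsg mem_enum.
exists (fun (x : S i) (g' : {g : {set {i : I & S i}} | g \in G}) => if Tagged S x \in val g' then clsv cls (Tagged S x) g g' * mu1 x else 0)%R.
split.
- move=> x g'; case: ifP => _; last by rewrite lexx ler01.
  have /andP[a0 a1] := Hclsb (Tagged S x) g g'.
  have /andP[b0 b1] := dist_bounds x Hd.
  by rewrite mulr_ge0 // mulr_ile1.
- move=> x.
  have /andP[b0 _] := dist_bounds x Hd.
  move: b0; rewrite le0r => /orP[/eqP ->|bpos].
    by apply: big1 => g' _; case: ifP => // _; rewrite mulr0.
  have Hne : x != l_start (P i).
    apply/negP => /eqP Ex; have := Hnost _ Htr; by rewrite /= -Ex bpos.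
  have Hp : is_parent (P i) x s.
    by exists (s, a, mu1) => //=; rewrite bpos eqxx.
  have [_ Hback] := Hpar i x s Hne Hp g.
  have [g'' Hg''] := (proj1 (Hmem (Tagged S s) g)) Hsg.
  have Hdef := Hback (ex_intro _ g'' Hg'').
  case Ec: (cls (Tagged S x) g) Hdef => [m|] // _.
  have Hm := Hcd _ _ _ Ec.
  transitivity (\sum_g' m g' * mu1 x)%R; last first.
    by rewrite -mulr_suml (proj2 Hm) mul1r.
  apply: eq_bigr => g' _; rewrite /clsv Ec; case: ifP => // Hn.
  have /andP[m0 _] := dist_bounds g' Hm.
  move: m0; rewrite le0r => /orP[/eqP ->|mpos]; first by rewrite mul0r.
  exfalso; move/negbT: Hn => /negP; apply; apply/Hmem; exists g.
  by rewrite /clsv Ec.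
- by move=> g'; rewrite /qmu ffunE [RHS]big_mkcond.
- move=> x g'; case: ifP => //; by rewrite ltxx.
Qed.
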